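(* For every integer $k\ge0$ and every $\mathbf q\in C^{k+1}[-1,1]\times C^k[-1,1]$, $$\operatorname{Re}\langle\tilde{\mathbf L}\mathbf q,\mathbf q\rangle_k\le-\tfrac12\|\mathbf q\|_k^2 .$$
   Context: $\tilde{\mathbf L}\mathbf q=\big(-y\partial_yq_1+q_2-q_1(-1),\ \partial_y^2q_1-q_2-y\partial_yq_2\big)$, where $q_1(-1)$ denotes the constant function with that value. For $\mathbf q,\tilde{\mathbf q}$ sufficiently smooth: $\langle\mathbf q,\tilde{\mathbf q}\rangle_0=\int_{-1}^1\partial_yq_1\overline{\partial_y\tilde q_1}\,dy+\int_{-1}^1q_2\overline{\tilde q_2}\,dy+q_1(-1)\overline{\tilde q_1(-1)}$, and for $k\ge1$: $\langle\mathbf q,\tilde{\mathbf q}\rangle_k=\int_{-1}^1\partial_y^{k+1}q_1\overline{\partial_y^{k+1}\tilde q_1}\,dy+\int_{-1}^1\partial_y^kq_2\overline{\partial_y^k\tilde q_2}\,dy+\langle\mathbf q,\tilde{\mathbf q}\rangle_0$; $\|\mathbf q\|_k^2=\langle\mathbf q,\mathbf q\rangle_k$. *)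

(* Defs.v *)
From Stdlib Require Import Reals.
From Coquelicot Require Import Coquelicot.
Open Scope R_scope.

Definition CDn (n : nat) (f : R -> C) : R -> C :=
  fun x => (Derive_n (fun t => Re (f t)) n x, Derive_n (fun t => Im (f t)) n x).

Definition RCn (m : nat) (g : R -> R) : Prop :=
  (forall j : nat, (j < m)%nat -> forall x : R, ex_derive (Derive_n g j) x) /\
  (forall j : nat, (j <= m)%nat -> forall x : R, continuous (Derive_n g j) x).

Definition CCn (m : nat) (f : R -> C) : Prop :=
  RCn m (fun t => Re (f t)) /\ RCn m (fun t => Im (f t)).

Definition CInt (f : R -> C) : C := RInt (V := C_R_CompleteNormedModule) f (-1) 1.

Definition pairD (n : nat) (f g : R -> C) : C :=
  CInt (fun y => Cmult (CDn n f y) (Cconj (CDn n g y))).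

Definition pair2 : Type := ((R -> C) * (R -> C))%type.

Definition inner0 (q qt : pair2) : C :=
  Cplus (Cplus (pairD 1 (fst q) (fst qt)) (pairD 0 (snd q) (snd qt)))
        (Cmult (fst q (-1)) (Cconj (fst qt (-1)))).

Definition inner (k : nat) (q qt : pair2) : C :=
  match k with
  | O => inner0 q qt
  | S _ => Cplus (Cplus (pairD (k + 1) (fst q) (fst qt)) (pairD k (snd q) (snd qt)))
                 (inner0 q qt)
  end.

Definition normsq (k : nat) (q : pair2) : R := Re (inner k q q).

Definition Lt (q : pair2) : pair2 :=
  ( fun y => Cminus (Cplus (Copp (Cmult (RtoC y) (CDn 1 (fst q) y))) (snd q y)) (fst q (-1)),
    fun y => Cminus (Cminus (CDn 2 (fst q) y) (snd q y)) (Cmult (RtoC y) (CDn 1 (snd q) y)) ).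

(* Main.v *)
Require Import Defs.
From Stdlib Require Import Reals Lra Lia FunctionalExtensionality.
From Coquelicot Require Import Coquelicot.
Open Scope R_scope.

Definition Sm (n : nat) (h : R -> R) : Prop :=
  forall i, (i < n)%nat -> forall x, ex_derive (Derive_n h i) x.

Lemma Sm_le m n h : (m <= n)%nat -> Sm n h -> Sm m h.
Proof. intros Hmn H i Hi x. apply H. lia. Qed.

Lemma Sm_S n h : Sm (S n) h -> Sm n h.
Proof. apply Sm_le; lia. Qed.

Lemma exd_plus (a b : R -> R) x : ex_derive a x -> ex_derive b x ->
  ex_derive (fun y => a y + b y) x.
Proof. intros. apply (ex_derive_plus a b x); auto. Qed.

Lemma Dn_plus n (a b : R -> R) : Sm n a -> Sm n b -> forall x,
  Derive_n (fun y => a y + b y) n x = Derive_n a n x + Derive_n b n x.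
Proof.
  induction n; intros Ha Hb x. reflexivity.
  simpl. rewrite (Derive_ext _ (fun y => Derive_n a n y + Derive_n b n y)).
  2:{ intros; apply IHn; apply Sm_S; auto. }
  apply Derive_plus; [apply Ha|apply Hb]; lia.
Qed.

Lemma Sm_plus n (a b : R -> R) : Sm n a -> Sm n b -> Sm n (fun y => a y + b y).
Proof.
  intros Ha Hb i Hi x.
  apply (ex_derive_ext (fun y => Derive_n a i y + Derive_n b i y)).
  { intros; symmetry; apply Dn_plus; apply (Sm_le i n); auto; lia. }
  apply exd_plus; [apply Ha|apply Hb]; lia.
Qed.

Lemma Sm_scal n c (a : R -> R) : Sm n a -> Sm n (fun y => c * a y).
Proof.
  intros Ha i Hi x.
  apply (ex_derive_ext (fun y => c * Derive_n a i y)).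
  { intros; symmetry; apply Derive_n_scal_l. }
  apply ex_derive_scal, Ha; lia.
Qed.

Lemma Sm_const n c : Sm n (fun _ => c).
Proof.
  intros i Hi x. destruct i.
  - apply ex_derive_const.
  - apply (ex_derive_ext (fun _ => 0)). { intros; symmetry; apply Derive_n_const. }
    apply ex_derive_const.
Qed.

Lemma Dn_ymul n (h : R -> R) : Sm n h -> forall x,
  Derive_n (fun y => y * h y) n x = x * Derive_n h n x + INR n * Derive_n h (pred n) x.
Proof.
  induction n; intros Hh x. simpl; ring.
  simpl Derive_n at 1.
  rewrite (Derive_ext _ (fun y => y * Derive_n h n y + INR n * Derive_n h (pred n) y)).
  2:{ intros; apply IHn; apply Sm_S; auto. }
  rewrite Derive_plus.
  2:{ apply ex_derive_mult. apply ex_derive_id. apply Hh; lia. }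
  2:{ apply ex_derive_scal. apply Hh; lia. }
  rewrite Derive_mult, Derive_scal.
  2: apply ex_derive_id. 2: apply Hh; lia.
  rewrite (Derive_ext (fun y => y) id) by reflexivity. rewrite Derive_id.
  destruct n.
  - simpl. ring.
  - change (Derive (Derive_n h (pred (S n))) x) with (Derive_n h (S n) x).
    simpl pred. change (Derive (Derive_n h n) x) with (Derive_n h (S n) x).
    rewrite !S_INR. change (Derive (Derive_n h (S n)) x) with (Derive_n h (S (S n)) x). ring.
Qed.

Lemma Sm_ymul n (h : R -> R) : Sm n h -> Sm n (fun y => y * h y).
Proof.
  intros Hh i Hi x.
  apply (ex_derive_ext (fun y => y * Derive_n h i y + INR i * Derive_n h (pred i) y)).
  { intros; symmetry; apply Dn_ymul; apply (Sm_le i n); auto; lia. }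
  apply exd_plus.
  - apply ex_derive_mult. apply ex_derive_id. apply Hh; lia.
  - apply ex_derive_scal. apply Hh; lia.
Qed.

Lemma Dn_D n (f : R -> R) x : Derive_n (Derive f) n x = Derive_n f (S n) x.
Proof.
  change (Derive f) with (Derive_n f 1). rewrite Derive_n_comp. f_equal. lia.
Qed.

Lemma Sm_D n f : Sm (S n) f -> Sm n (Derive f).
Proof.
  intros Hf i Hi x.
  apply (ex_derive_ext (Derive_n f (S i))). { intros; symmetry; apply Dn_D. }
  apply Hf; lia.
Qed.

Definition Lf (f g : R -> R) : R -> R := fun y => -(y * Derive f y) + g y - f (-1).
Definition Lg (f g : R -> R) : R -> R := fun y => Derive (Derive f) y - g y - y * Derive g y.

Lemma DLf j f g : Sm (S (S j)) f -> Sm (S j) g -> forall x,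
  Derive_n (Lf f g) (S j) x =
  -(x * Derive_n f (S (S j)) x) - (INR j + 1) * Derive_n f (S j) x + Derive_n g (S j) x.
Proof.
  intros Hf Hg x.
  assert (H1 : Sm (S j) (Derive f)) by (apply Sm_D; auto).
  assert (H2 : Sm (S j) (fun y => (-1) * (y * Derive f y))) by (apply Sm_scal, Sm_ymul; auto).
  rewrite (Derive_n_ext _ (fun y => ((-1) * (y * Derive f y) + g y) + (fun _ => - f (-1)) y)).
  2:{ intros; unfold Lf; ring. }
  rewrite Dn_plus. 2: apply Sm_plus; auto. 2: apply Sm_const.
  rewrite Derive_n_const, Dn_plus; auto.
  rewrite Derive_n_scal_l, Dn_ymul; auto.
  rewrite !Dn_D. simpl pred. rewrite S_INR. ring.
Qed.

Lemma DLg j f g : Sm (S (S j)) f -> Sm (S j) g -> forall x,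
  Derive_n (Lg f g) j x =
  Derive_n f (S (S j)) x - Derive_n g j x - x * Derive_n g (S j) x - INR j * Derive_n g j x.
Proof.
  intros Hf Hg x.
  assert (H1 : Sm j (Derive (Derive f))) by (apply Sm_D, Sm_D; auto).
  assert (H0 : Sm j g) by (apply Sm_S; auto).
  assert (H3 : Sm j (Derive g)) by (apply Sm_D; auto).
  rewrite (Derive_n_ext _ (fun y => (Derive (Derive f) y + (-1) * g y) + (-1) * (y * Derive g y))).
  2:{ intros; unfold Lg; ring. }
  rewrite Dn_plus. 2: apply Sm_plus; auto; apply Sm_scal; auto. 2: apply Sm_scal, Sm_ymul; auto.
  rewrite Dn_plus; auto. 2: apply Sm_scal; auto.
  rewrite !Derive_n_scal_l, Dn_ymul; auto.
  rewrite !Dn_D. destruct j.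
  - simpl. ring.
  - simpl pred. ring.
Qed.

Lemma cR_plus (f g : R -> R) x : continuous f x -> continuous g x -> continuous (fun y => f y + g y) x.
Proof. intros; apply (continuous_plus f g x); auto. Qed.
Lemma cR_minus (f g : R -> R) x : continuous f x -> continuous g x -> continuous (fun y => f y - g y) x.
Proof. intros; apply (continuous_minus f g x); auto. Qed.
Lemma cR_mult (f g : R -> R) x : continuous f x -> continuous g x -> continuous (fun y => f y * g y) x.
Proof. intros; apply (continuous_mult f g x); auto. Qed.
Lemma cR_opp (f : R -> R) x : continuous f x -> continuous (fun y => - f y) x.
Proof. intros; apply (continuous_opp f x); auto. Qed.
Lemma cR_const (c : R) x : continuous (fun _ : R => c) x.
Proof. apply continuous_const. Qed.
Lemma cR_id x : continuous (fun y : R => y) x.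
Proof. apply continuous_id. Qed.

Lemma cR_div (f : R -> R) c x : continuous f x -> continuous (fun y => f y / c) x.
Proof. intros; unfold Rdiv; apply cR_mult; auto; apply cR_const. Qed.

Ltac cont := repeat first [assumption | match goal with H : forall x, continuous ?f x |- continuous ?f _ => apply H end | apply cR_id | apply cR_const | apply cR_plus | apply cR_minus | apply cR_mult | apply cR_opp | apply cR_div].

Lemma exR (f : R -> R) : (forall x, continuous f x) -> ex_RInt f (-1) 1.
Proof. intros H. apply (ex_RInt_continuous (V:=R_CompleteNormedModule)). intros; apply H. Qed.

Lemma level_int (F F' G G' : R -> R) (c : R) :
  (forall x, is_derive F x (F' x)) -> (forall x, is_derive G x (G' x)) ->
  (forall x, continuous F' x) -> (forall x, continuous G' x) ->
  RInt (fun y => (-(y * F' y) - (c + 1) * F y + G' y) * F y) (-1) 1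
  + RInt (fun y => (F' y - G y - y * G' y - c * G y) * G y) (-1) 1
  = - (c + 1/2) * (RInt (fun y => F y * F y) (-1) 1 + RInt (fun y => G y * G y) (-1) 1)
    - (F 1 * F 1 + F (-1) * F (-1) + G 1 * G 1 + G (-1) * G (-1)) / 2
    + F 1 * G 1 - F (-1) * G (-1).
Proof.
  intros dF dG cF' cG'.
  assert (cF : forall x, continuous F x) by (intros; apply (ex_derive_continuous (K:=R_AbsRing) (V:=R_NormedModule)); eexists; apply dF).
  assert (cG : forall x, continuous G x) by (intros; apply (ex_derive_continuous (K:=R_AbsRing) (V:=R_NormedModule)); eexists; apply dG).
  set (H := fun y => F y * G y - y * (F y * F y) / 2 - y * (G y * G y) / 2).
  set (H' := fun y => F' y * G y + F y * G' y - (F y * F y / 2 + y * F y * F' y)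
                       - (G y * G y / 2 + y * G y * G' y)).
  assert (dH : forall x, is_derive H x (H' x)).
  { intros x. unfold H, H'. auto_derive.
    - repeat split; eexists; eauto.
    - replace (Derive (fun x => F x) x) with (F' x) by (symmetry; apply is_derive_unique, dF).
      replace (Derive (fun x => G x) x) with (G' x) by (symmetry; apply is_derive_unique, dG). field. }
  assert (iH : is_RInt H' (-1) 1 (H 1 - H (-1))).
  { apply (is_RInt_derive H H'). intros; apply dH. intros; unfold H'; cont. }
  assert (eFF : ex_RInt (fun y => F y * F y) (-1) 1) by (apply exR; intros; cont).
  assert (eGG : ex_RInt (fun y => G y * G y) (-1) 1) by (apply exR; intros; cont).
  rewrite <- (RInt_plus (V:=R_CompleteNormedModule)).
  2: apply exR; intros; cont. 2: apply exR; intros; cont.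
  rewrite (RInt_ext _ (fun y => minus (H' y) (scal (c + 1/2) (plus (F y * F y) (G y * G y))))).
  2:{ intros. unfold H', minus, plus, scal, opp; simpl. unfold mult; simpl. match goal with |- ?a = ?b => change (@eq R a b) end. field. }
  rewrite (RInt_minus (V:=R_CompleteNormedModule)). 2: eexists; eauto. 2:{ apply exR; intros. unfold scal, plus; simpl; unfold mult; simpl. cont. }
  rewrite (RInt_scal (V:=R_CompleteNormedModule)). 2:{ apply exR; intros. unfold plus; simpl. cont. }
  rewrite (RInt_plus (V:=R_CompleteNormedModule)); auto.
  rewrite (is_RInt_unique _ _ _ _ iH).
  unfold H, minus, plus, scal, opp; simpl. unfold mult; simpl. field.
Qed.

Lemma RCn_le m n g : (n <= m)%nat -> RCn m g -> RCn n g.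
Proof. intros Hnm [H1 H2]; split; intros; [apply H1|apply H2]; lia. Qed.

Lemma RCn_Sm m g : RCn m g -> Sm m g.
Proof. intros [H _]; exact H. Qed.

Lemma RCn_c m g j x : RCn m g -> (j <= m)%nat -> continuous (Derive_n g j) x.
Proof. intros [_ H] Hj; apply H; auto. Qed.

Lemma RCn_d m g j x : RCn m g -> (j < m)%nat -> is_derive (Derive_n g j) x (Derive_n g (S j) x).
Proof. intros [H _] Hj. apply (Derive_correct (Derive_n g j)). apply H; auto. Qed.

Definition P (n : nat) (u v : R -> R) : R := RInt (fun y => Derive_n u n y * Derive_n v n y) (-1) 1.

Lemma level j f g : RCn (S (S j)) f -> RCn (S j) g ->
  P (S j) (Lf f g) f + P j (Lg f g) g
  = - (INR j + 1/2) * (P (S j) f f + P j g g)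
    - (Derive_n f (S j) 1 * Derive_n f (S j) 1 + Derive_n f (S j) (-1) * Derive_n f (S j) (-1)
       + Derive_n g j 1 * Derive_n g j 1 + Derive_n g j (-1) * Derive_n g j (-1)) / 2
    + Derive_n f (S j) 1 * Derive_n g j 1 - Derive_n f (S j) (-1) * Derive_n g j (-1).
Proof.
  intros Hf Hg. unfold P.
  rewrite (RInt_ext (fun y => Derive_n (Lf f g) (S j) y * Derive_n f (S j) y)
    (fun y => (-(y * Derive_n f (S (S j)) y) - (INR j + 1) * Derive_n f (S j) y + Derive_n g (S j) y) * Derive_n f (S j) y)).
  2:{ intros; rewrite DLf; auto; apply RCn_Sm; auto. }
  rewrite (RInt_ext (fun y => Derive_n (Lg f g) j y * Derive_n g j y)
    (fun y => (Derive_n f (S (S j)) y - Derive_n g j y - y * Derive_n g (S j) y - INR j * Derive_n g j y) * Derive_n g j y)).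
  2:{ intros; rewrite DLg; auto; apply RCn_Sm; auto. }
  apply level_int.
  - intros; apply (RCn_d (S (S j))); auto.
  - intros; apply (RCn_d (S j)); auto.
  - intros; apply (RCn_c (S (S j))); auto.
  - intros; apply (RCn_c (S j)); auto.
Qed.

Lemma contLf j f g x : RCn (S (S j)) f -> RCn (S j) g -> continuous (Derive_n (Lf f g) (S j)) x.
Proof.
  intros Hf Hg.
  apply (continuous_ext (fun y => -(y * Derive_n f (S (S j)) y) - (INR j + 1) * Derive_n f (S j) y + Derive_n g (S j) y)).
  { intros; rewrite DLf; auto; apply RCn_Sm; auto. }
  assert (continuous (Derive_n f (S (S j))) x) by (apply (RCn_c (S (S j))); auto).
  assert (continuous (Derive_n f (S j)) x) by (apply (RCn_c (S (S j))); auto).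
  assert (continuous (Derive_n g (S j)) x) by (apply (RCn_c (S j)); auto).
  cont.
Qed.

Lemma contLg j f g x : RCn (S (S j)) f -> RCn (S j) g -> continuous (Derive_n (Lg f g) j) x.
Proof.
  intros Hf Hg.
  apply (continuous_ext (fun y => Derive_n f (S (S j)) y - Derive_n g j y - y * Derive_n g (S j) y - INR j * Derive_n g j y)).
  { intros; rewrite DLg; auto; apply RCn_Sm; auto. }
  assert (continuous (Derive_n f (S (S j))) x) by (apply (RCn_c (S (S j))); auto).
  assert (continuous (Derive_n g j) x) by (apply (RCn_c (S j)); auto).
  assert (continuous (Derive_n g (S j)) x) by (apply (RCn_c (S j)); auto).
  cont.
Qed.

Lemma P_sq_ge0 n u : (forall x, continuous (Derive_n u n) x) -> 0 <= P n u u.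
Proof.
  intros H. unfold P. apply RInt_ge_0. lra. apply exR; intros; cont.
  intros; apply Rle_0_sqr.
Qed.

Lemma real_main k f g : RCn (S (S k)) f -> RCn (S k) g ->
  (match k with O => 0 | S _ => P (S k) (Lf f g) f + P k (Lg f g) g end)
  + (P 1 (Lf f g) f + P 0 (Lg f g) g) + Lf f g (-1) * f (-1)
  <= - (1/2) * ((match k with O => 0 | S _ => P (S k) f f + P k g g end)
  + (P 1 f f + P 0 g g) + f (-1) * f (-1)).
Proof.
  intros Hf Hg.
  assert (Hf0 : RCn 2 f) by (apply (RCn_le (S (S k))); auto; lia).
  assert (Hg0 : RCn 1 g) by (apply (RCn_le (S k)); auto; lia).
  pose proof (level 0 f g Hf0 Hg0) as L0.
  assert (I0 : 0 <= P 1 f f) by (apply P_sq_ge0; intros; apply (RCn_c 2); auto).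
  assert (I1 : 0 <= P 0 g g) by (apply P_sq_ge0; intros; apply (RCn_c 1); auto).
  unfold Lf at 3. simpl Derive_n in L0 |- *. simpl INR in L0.
  set (a := Derive f 1) in *. set (b := g 1) in *. set (c := Derive f (-1)) in *.
  set (d := g (-1)) in *. set (e := f (-1)) in *.
  assert (Q1 : 0 <= (a - b) * (a - b)) by apply Rle_0_sqr.
  assert (Q2 : 0 <= (c + d - e) * (c + d - e)) by apply Rle_0_sqr.
  destruct k as [|k].
  - nra.
  - pose proof (level (S k) f g Hf Hg) as Lk.
    assert (J0 : 0 <= P (S (S k)) f f) by (apply P_sq_ge0; intros; apply (RCn_c (S (S (S k)))); auto).
    assert (J1 : 0 <= P (S k) g g) by (apply P_sq_ge0; intros; apply (RCn_c (S (S k))); auto).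
    assert (M : 0 <= INR (S k) * (P (S (S k)) f f + P (S k) g g)).
    { apply Rmult_le_pos. apply pos_INR. lra. }
    set (F1 := Derive_n f (S (S k)) 1) in *. set (Fm := Derive_n f (S (S k)) (-1)) in *.
    set (G1 := Derive_n g (S k) 1) in *. set (Gm := Derive_n g (S k) (-1)) in *.
    assert (Q3 : 0 <= (F1 - G1) * (F1 - G1)) by apply Rle_0_sqr.
    assert (Q4 : 0 <= (Fm + Gm) * (Fm + Gm)) by apply Rle_0_sqr.
    nra.
Qed.

Lemma ReCInt (h : R -> C) :
  ex_RInt (fun y => fst (h y)) (-1) 1 -> ex_RInt (fun y => snd (h y)) (-1) 1 ->
  Re (CInt h) = RInt (fun y => fst (h y)) (-1) 1.
Proof.
  intros H1 H2.
  assert (Hi : is_RInt (V:=C_R_CompleteNormedModule) h (-1) 1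
                 (RInt (fun y => fst (h y)) (-1) 1, RInt (fun y => snd (h y)) (-1) 1)).
  { apply (is_RInt_fct_extend_pair (U:=R_NormedModule) (V:=R_NormedModule));
      apply (RInt_correct (V:=R_CompleteNormedModule)); auto. }
  unfold CInt. rewrite (is_RInt_unique _ _ _ _ Hi). reflexivity.
Qed.

Lemma RePairD n (u v : R -> C) :
  (forall x, continuous (Derive_n (fun t => Re (u t)) n) x) ->
  (forall x, continuous (Derive_n (fun t => Im (u t)) n) x) ->
  (forall x, continuous (Derive_n (fun t => Re (v t)) n) x) ->
  (forall x, continuous (Derive_n (fun t => Im (v t)) n) x) ->
  Re (pairD n u v) = P n (fun t => Re (u t)) (fun t => Re (v t)) + P n (fun t => Im (u t)) (fun t => Im (v t)).
Proof.
  intros c1 c2 c3 c4. unfold pairD. rewrite ReCInt.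
  - unfold P. rewrite <- (RInt_plus (V:=R_CompleteNormedModule)).
    + apply RInt_ext. intros. unfold CDn, Cmult, Cconj; simpl. match goal with |- ?a = ?b => change (@eq R a b) end. unfold plus; simpl. ring.
    + apply exR; intros; cont.
    + apply exR; intros; cont.
  - apply exR; intros. unfold CDn, Cmult, Cconj; simpl. cont.
  - apply exR; intros. unfold CDn, Cmult, Cconj; simpl. cont.
Qed.

Ltac Rring := match goal with |- ?a = ?b => change (@eq R a b) end; ring.

Section Br.
Variables q1 q2 : R -> C.
Let f1 := fun t => Re (q1 t).
Let f2 := fun t => Im (q1 t).
Let g1 := fun t => Re (q2 t).
Let g2 := fun t => Im (q2 t).

Lemma eq1 : (fun t => Re (fst (Lt (q1, q2)) t)) = Lf f1 g1.
Proof. apply functional_extensionality; intros. unfold Lt, Lf, CDn, f1, g1; simpl. unfold Re, Im. Rring. Qed.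
Lemma eq2 : (fun t => Im (fst (Lt (q1, q2)) t)) = Lf f2 g2.
Proof. apply functional_extensionality; intros. unfold Lt, Lf, CDn, f2, g2; simpl. unfold Re, Im. Rring. Qed.
Lemma eq3 : (fun t => Re (snd (Lt (q1, q2)) t)) = Lg f1 g1.
Proof. apply functional_extensionality; intros. unfold Lt, Lg, CDn, f1, g1. cbv beta. change (Derive_n (fun t => Re (q1 t)) 2 x) with (Derive (Derive (fun t => Re (q1 t))) x). unfold Cminus, Cplus, Copp, Cmult, RtoC, Re, Im; cbn [fst snd]. change (Derive_n (fun t => fst (q1 t)) 2 x) with (Derive (Derive (fun t => fst (q1 t))) x). change (Derive_n (fun t => fst (q2 t)) 1 x) with (Derive (fun t => fst (q2 t)) x). Rring. Qed.
Lemma eq4 : (fun t => Im (snd (Lt (q1, q2)) t)) = Lg f2 g2.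
Proof. apply functional_extensionality; intros. unfold Lt, Lg, CDn, f2, g2. cbv beta. change (Derive_n (fun t => Im (q1 t)) 2 x) with (Derive (Derive (fun t => Im (q1 t))) x). unfold Cminus, Cplus, Copp, Cmult, RtoC, Re, Im; cbn [fst snd]. change (Derive_n (fun t => snd (q1 t)) 2 x) with (Derive (Derive (fun t => snd (q1 t))) x). change (Derive_n (fun t => snd (q2 t)) 1 x) with (Derive (fun t => snd (q2 t)) x). Rring. Qed.
End Br.

Definition Areal k f g :=
  (match k with O => 0 | S _ => P (S k) (Lf f g) f + P k (Lg f g) g end)
  + (P 1 (Lf f g) f + P 0 (Lg f g) g) + Lf f g (-1) * f (-1).
Definition Nreal k (f g : R -> R) :=
  (match k with O => 0 | S _ => P (S k) f f + P k g g end)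
  + (P 1 f f + P 0 g g) + f (-1) * f (-1).

Lemma Re_Cplus a b : Re (Cplus a b) = Re a + Re b.
Proof. reflexivity. Qed.
Lemma Re_Cmc a b : Re (Cmult a (Cconj b)) = Re a * Re b + Im a * Im b.
Proof. unfold Cmult, Cconj, Re, Im; simpl. ring. Qed.

Theorem mainTheorem7 (k : nat) (q1 q2 : R -> C) :
  CCn (k + 2) q1 -> CCn (k + 1) q2 ->
  Re (inner k (Lt (q1, q2)) (q1, q2)) <= - (1 / 2) * normsq k (q1, q2).
Proof.
  intros [Hf1 Hf2] [Hg1 Hg2].
  replace (k + 2)%nat with (S (S k)) in * by lia.
  replace (k + 1)%nat with (S k) in * by lia.
  pose proof (eq1 q1 q2) as E1. pose proof (eq2 q1 q2) as E2.
  pose proof (eq3 q1 q2) as E3. pose proof (eq4 q1 q2) as E4.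
  set (f1 := fun t => Re (q1 t)) in *. set (f2 := fun t => Im (q1 t)) in *.
  set (g1 := fun t => Re (q2 t)) in *. set (g2 := fun t => Im (q2 t)) in *.
  assert (Pt : Re (Cmult (fst (Lt (q1, q2)) (-1)) (Cconj (fst (q1, q2) (-1))))
               = Lf f1 g1 (-1) * f1 (-1) + Lf f2 g2 (-1) * f2 (-1)).
  { rewrite Re_Cmc. rewrite <- E1, <- E2. reflexivity. }
  assert (Hf10 : RCn 2 f1) by (apply (RCn_le (S (S k))); auto; lia).
  assert (Hf20 : RCn 2 f2) by (apply (RCn_le (S (S k))); auto; lia).
  assert (Hg10 : RCn 1 g1) by (apply (RCn_le (S k)); auto; lia).
  assert (Hg20 : RCn 1 g2) by (apply (RCn_le (S k)); auto; lia).
  Ltac sc q1 q2 f1 f2 g1 g2 E1 E2 E3 E4 Hf1 Hf2 Hg1 Hg2 Hf10 Hf20 Hg10 Hg20 :=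
    intros x; rewrite ?E1, ?E2, ?E3, ?E4;
    change (fun t => Re (q1 t)) with f1; change (fun t => Im (q1 t)) with f2;
    change (fun t => Re (q2 t)) with g1; change (fun t => Im (q2 t)) with g2;
    lazymatch goal with
    | |- continuous (Derive_n (Lf f1 g1) (S O)) _ => exact (contLf _ _ _ _ Hf10 Hg10)
    | |- continuous (Derive_n (Lf f2 g2) (S O)) _ => exact (contLf _ _ _ _ Hf20 Hg20)
    | |- continuous (Derive_n (Lg f1 g1) O) _ => exact (contLg _ _ _ _ Hf10 Hg10)
    | |- continuous (Derive_n (Lg f2 g2) O) _ => exact (contLg _ _ _ _ Hf20 Hg20)
    | |- continuous (Derive_n (Lf f1 g1) _) _ => exact (contLf _ _ _ _ Hf1 Hg1)
    | |- continuous (Derive_n (Lf f2 g2) _) _ => exact (contLf _ _ _ _ Hf2 Hg2)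
    | |- continuous (Derive_n (Lg f1 g1) _) _ => exact (contLg _ _ _ _ Hf1 Hg1)
    | |- continuous (Derive_n (Lg f2 g2) _) _ => exact (contLg _ _ _ _ Hf2 Hg2)
    | |- continuous (Derive_n f1 _) _ => apply (RCn_c _ _ _ _ Hf1); lia
    | |- continuous (Derive_n f2 _) _ => apply (RCn_c _ _ _ _ Hf2); lia
    | |- continuous (Derive_n g1 _) _ => apply (RCn_c _ _ _ _ Hg1); lia
    | |- continuous (Derive_n g2 _) _ => apply (RCn_c _ _ _ _ Hg2); lia
    end.
  assert (A : Re (inner k (Lt (q1, q2)) (q1, q2)) = Areal k f1 g1 + Areal k f2 g2).
  { destruct k as [|k]; unfold inner, inner0; rewrite !Re_Cplus, Pt; cbn [fst snd].
    - rewrite (RePairD 1 (fst (Lt (q1, q2))) q1), (RePairD 0 (snd (Lt (q1, q2))) q2).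
      all: try (sc q1 q2 f1 f2 g1 g2 E1 E2 E3 E4 Hf1 Hf2 Hg1 Hg2 Hf10 Hf20 Hg10 Hg20).
      rewrite E1, E2, E3, E4.
      change (fun t => Re (q1 t)) with f1; change (fun t => Im (q1 t)) with f2;
      change (fun t => Re (q2 t)) with g1; change (fun t => Im (q2 t)) with g2.
      unfold Areal. lra.
    - replace (S k + 1)%nat with (S (S k)) by lia.
      rewrite (RePairD (S (S k)) (fst (Lt (q1, q2))) q1), (RePairD (S k) (snd (Lt (q1, q2))) q2),
        (RePairD 1 (fst (Lt (q1, q2))) q1), (RePairD 0 (snd (Lt (q1, q2))) q2).
      all: try (sc q1 q2 f1 f2 g1 g2 E1 E2 E3 E4 Hf1 Hf2 Hg1 Hg2 Hf10 Hf20 Hg10 Hg20).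
      rewrite E1, E2, E3, E4.
      change (fun t => Re (q1 t)) with f1; change (fun t => Im (q1 t)) with f2;
      change (fun t => Re (q2 t)) with g1; change (fun t => Im (q2 t)) with g2.
      unfold Areal. lra. }
  assert (N : normsq k (q1, q2) = Nreal k f1 g1 + Nreal k f2 g2).
  { unfold normsq. destruct k as [|k]; unfold inner, inner0; rewrite !Re_Cplus, Re_Cmc; cbn [fst snd].
    - rewrite (RePairD 1 q1 q1), (RePairD 0 q2 q2).
      all: try (sc q1 q2 f1 f2 g1 g2 E1 E2 E3 E4 Hf1 Hf2 Hg1 Hg2 Hf10 Hf20 Hg10 Hg20).
      change (fun t => Re (q1 t)) with f1; change (fun t => Im (q1 t)) with f2;
      change (fun t => Re (q2 t)) with g1; change (fun t => Im (q2 t)) with g2.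
      unfold Nreal. change (Re (q1 (-1))) with (f1 (-1)). change (Im (q1 (-1))) with (f2 (-1)). lra.
    - replace (S k + 1)%nat with (S (S k)) by lia.
      rewrite (RePairD (S (S k)) q1 q1), (RePairD (S k) q2 q2), (RePairD 1 q1 q1), (RePairD 0 q2 q2).
      all: try (sc q1 q2 f1 f2 g1 g2 E1 E2 E3 E4 Hf1 Hf2 Hg1 Hg2 Hf10 Hf20 Hg10 Hg20).
      change (fun t => Re (q1 t)) with f1; change (fun t => Im (q1 t)) with f2;
      change (fun t => Re (q2 t)) with g1; change (fun t => Im (q2 t)) with g2.
      unfold Nreal. change (Re (q1 (-1))) with (f1 (-1)). change (Im (q1 (-1))) with (f2 (-1)). lra. }
  rewrite A, N.
  pose proof (real_main k f1 g1 Hf1 Hg1). pose proof (real_main k f2 g2 Hf2 Hg2).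
  unfold Areal, Nreal in *. lra.
Qed.
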